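(* Let $T$ be a spherically homogeneous rooted tree in which every vertex has at least $2$ children, and let $G\le\mathrm{Aut}~T$ be a just-infinite branch group. Then $G$ has property $\mathrm{(VRC)}$ if and only if $G$ is torsion.
   Context: $\mathrm{Aut}~T$ is the group of automorphisms of $T$ fixing the root; $\mathcal{L}_n$ is the $n$th level; $T_v$ is the subtree of descendants of $v$. For $G\le\mathrm{Aut}~T$, $\mathrm{rist}_G(v)$ is the subgroup of elements of $G$ fixing every vertex outside $T_v$, and $\mathrm{Rist}_G(n)=\prod_{v\in\mathcal{L}_n}\mathrm{rist}_G(v)$. $G$ is branch if it acts transitively on every level and each $\mathrm{Rist}_G(n)$ has finite index in $G$. A group is just-infinite if it is infinite and every non-trivial normal subgroup has finite index. $H\le G$ is a virtual retract of $G$ if there is a finite-index $K\le G$ containing $H$ and a homomorphism $K\to H$ restricting to the identity on $H$. $G$ has property $\mathrm{(VRC)}$ if every cyclic subgroup of $G$ is a virtual retract of $G$. $G$ is torsion if every element has finite order. *)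

(* Defs.v *)
From Stdlib Require List.
From mathcomp Require Import all_boot.

Set Implicit Arguments.
Unset Strict Implicit.
Unset Printing Implicit Defensive.

(* The spherically homogeneous rooted tree with branching sequence m:
   vertices of level n are the words v of length n with v_i < m i;
   the root is the empty word, the children of v are rcons v a (a < m (size v)). *)
Definition vertex (m : nat -> nat) (v : seq nat) : Prop :=
  forall i, i < size v -> nth 0 v i < m i.

(* u is a prefix of w, i.e. w lies in the subtree T_u *)
Definition prefix (u w : seq nat) : Prop := take (size u) w = u.

(* Tree maps: functions on words; automorphisms act as the identity off the tree
   (so that automorphisms are determined extensionally by their action on T). *)
Definition aut := seq nat -> seq nat.

Definition mulf (f g : aut) : aut := fun v => f (g v).
Definition idf : aut := fun v => v.

Definition is_aut (m : nat -> nat) (f : aut) : Prop :=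
  [/\ (forall v, ~ vertex m v -> f v = v),
      (forall v, vertex m v -> vertex m (f v)),
      (forall v, size (f v) = size v),
      (forall v k, vertex m v -> f (take k v) = take k (f v)) &
      (injective f /\
       forall w, vertex m w -> exists v, vertex m v /\ f v = w)].

Definition subgroup_of (A H : aut -> Prop) : Prop :=
  [/\ (forall h, H h -> A h),
      H idf,
      (forall x y, H x -> H y -> H (mulf x y)) &
      (forall h, H h -> exists h', [/\ H h', mulf h h' = idf & mulf h' h = idf])].

Definition generated (G S : aut -> Prop) : aut -> Prop :=
  fun x => forall H, subgroup_of G H -> (forall s, S s -> H s) -> H x.

Definition finite_set (G : aut -> Prop) : Prop :=
  exists s : list aut, forall g, G g -> List.In g s.

Definition finite_index (G H : aut -> Prop) : Prop :=
  exists s : list aut, forall g, G g ->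
    exists2 x, List.In x s & exists h, H h /\ g = mulf x h.

Definition normal_in (G N : aut -> Prop) : Prop :=
  subgroup_of G N /\
  forall g gi n, G g -> mulf g gi = idf -> mulf gi g = idf -> N n ->
    N (mulf g (mulf n gi)).

Definition just_infinite (G : aut -> Prop) : Prop :=
  ~ finite_set G /\
  forall N, normal_in G N -> (exists n, N n /\ n <> idf) -> finite_index G N.

Definition rist (m : nat -> nat) (G : aut -> Prop) (v : seq nat) : aut -> Prop :=
  fun g => G g /\ forall w, vertex m w -> ~ prefix v w -> g w = w.

(* Rist_G(n): the (internal direct) product of the rist_G(v), v in level n,
   i.e. the subgroup they generate *)
Definition Rist (m : nat -> nat) (G : aut -> Prop) (n : nat) : aut -> Prop :=
  generated G (fun g => exists v, [/\ vertex m v, size v = n & rist m G v g]).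

Definition branch (m : nat -> nat) (G : aut -> Prop) : Prop :=
  (forall u v, vertex m u -> vertex m v -> size u = size v ->
     exists g, G g /\ g u = v) /\
  (forall n, finite_index G (Rist m G n)).

Definition virtual_retract (G H : aut -> Prop) : Prop :=
  exists K, [/\ subgroup_of G K, finite_index G K, (forall h, H h -> K h) &
    exists rho : aut -> aut,
      [/\ (forall k, K k -> H (rho k)),
          (forall x y, K x -> K y -> rho (mulf x y) = mulf (rho x) (rho y)) &
          (forall h, H h -> rho h = h)]].

Definition cyclic_sub (G : aut -> Prop) (g : aut) : aut -> Prop :=
  generated G (fun x => x = g).

Definition VRC (G : aut -> Prop) : Prop :=
  forall g, G g -> virtual_retract G (cyclic_sub G g).

Definition torsion (G : aut -> Prop) : Prop :=
  forall g, G g -> exists n, 0 < n /\ iter n (mulf g) idf = idf.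

(* Main.v *)
Require Import Defs.
From mathcomp Require Import all_boot.
From mathcomp Require Import zify.
From Stdlib Require Import Classical ClassicalEpsilon FunctionalExtensionality.
From Stdlib Require List.

Set Implicit Arguments.
Unset Strict Implicit.
Unset Printing Implicit Defensive.

Set Implicit Arguments.
Unset Strict Implicit.
Unset Printing Implicit Defensive.

Definition pw (x : aut) n : aut := iter n (mulf x) idf.

Lemma pwS x n : pw x n.+1 = mulf x (pw x n). Proof. by []. Qed.
Lemma pw0 x : pw x 0 = idf. Proof. by []. Qed.
Lemma pw1 x : pw x 1 = x. Proof. by []. Qed.
Lemma pwD x a b : pw x (a + b) = mulf (pw x a) (pw x b).
Proof. by elim: a => [|a IH] //; rewrite addSn pwS IH. Qed.
Lemma pw_idf n : pw idf n = idf.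
Proof. by elim: n => [|n IH] //; rewrite pwS IH. Qed.
Lemma pwM x a b : pw x (a * b) = pw (pw x a) b.
Proof. elim: b => [|b IH]; first by rewrite muln0. by rewrite mulnS pwD IH. Qed.
Lemma pwC x a b : mulf (pw x a) (pw x b) = mulf (pw x b) (pw x a).
Proof. by rewrite -!pwD addnC. Qed.

Lemma mulfA (f g h : aut) : mulf f (mulf g h) = mulf (mulf f g) h. Proof. by []. Qed.
Lemma mul1f (f : aut) : mulf idf f = f. Proof. by []. Qed.
Lemma mulf1 (f : aut) : mulf f idf = f. Proof. by []. Qed.

Lemma pw_conj x y yi n : mulf y yi = idf -> mulf yi y = idf ->
  pw (mulf y (mulf x yi)) n = mulf y (mulf (pw x n) yi).
Proof.
move=> h1 h2; elim: n => [|n IH]; first by rewrite pw0 h1.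
rewrite pwS IH pwS; apply: functional_extensionality => v /=.
have := equal_f h2 (pw x n (yi v)); rewrite /mulf /idf => ->.
by [].
Qed.

Lemma aut_fix m f : is_aut m f -> forall v, ~ vertex m v -> f v = v. Proof. by case. Qed.
Lemma aut_vert m f : is_aut m f -> forall v, vertex m v -> vertex m (f v). Proof. by case. Qed.
Lemma aut_size m f : is_aut m f -> forall v, size (f v) = size v. Proof. by case. Qed.
Lemma aut_take m f : is_aut m f -> forall v k, vertex m v -> f (take k v) = take k (f v). Proof. by case. Qed.
Lemma aut_inj m f : is_aut m f -> injective f. Proof. by case=> _ _ _ _ []. Qed.

Lemma sg_in A H h : subgroup_of A H -> H h -> A h. Proof. by case=> a _ _ _; apply: a. Qed.
Lemma sg_1 A H : subgroup_of A H -> H idf. Proof. by case. Qed.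
Lemma sg_M A H x y : subgroup_of A H -> H x -> H y -> H (mulf x y). Proof. by case=> _ _ a _; apply: a. Qed.
Lemma sg_V A H h : subgroup_of A H -> H h -> exists h', [/\ H h', mulf h h' = idf & mulf h' h = idf].
Proof. by case=> _ _ _ a; apply: a. Qed.
Lemma sg_pw A H x n : subgroup_of A H -> H x -> H (pw x n).
Proof. move=> sH Hx; elim: n => [|n IH]; [exact: sg_1 sH | rewrite pwS; exact: sg_M sH Hx IH]. Qed.

Lemma inv_uniq (c c' c'' : aut) : mulf c c' = idf -> mulf c'' c = idf -> c'' = c'.
Proof. move=> h1 h2. change c'' with (mulf c'' idf). by rewrite -h1 mulfA h2. Qed.

Lemma Gaut m G g : subgroup_of (is_aut m) G -> G g -> is_aut m g.
Proof. exact: sg_in. Qed.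

Lemma pw_aut m G x n : subgroup_of (is_aut m) G -> G x -> is_aut m (pw x n).
Proof. move=> sG Gx; apply: (Gaut sG); exact: (sg_pw n sG Gx). Qed.

Lemma moves m f : is_aut m f -> f <> idf -> exists v, vertex m v /\ f v <> v.
Proof.
move=> af nf; apply: NNPP => hn; apply: nf; apply: functional_extensionality => v.
case: (classic (vertex m v)) => hv; last exact: aut_fix af v hv.
apply: NNPP => ne; apply: hn; by exists v.
Qed.

Definition fixout m (c : aut) u := forall w, vertex m w -> ~ Defs.prefix u w -> c w = w.

Lemma prefix_size u z : Defs.prefix u z -> size u <= size z.
Proof. rewrite /Defs.prefix => <-; rewrite size_take; case: ifP => //; lia. Qed.

Lemma prefix_refl u : Defs.prefix u u.
Proof. exact: take_size. Qed.

Lemma prefix_trans w u z : Defs.prefix w u -> Defs.prefix u z -> Defs.prefix w z.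
Proof.
move=> hw hu; have sz := prefix_size hw; move: hw hu; rewrite /Defs.prefix => hw hu.
by rewrite -[in RHS]hw -hu take_takel.
Qed.

Lemma prefix_same u1 u2 z : size u1 = size u2 -> Defs.prefix u1 z -> Defs.prefix u2 z -> u1 = u2.
Proof. by rewrite /Defs.prefix => e <- <-; rewrite e. Qed.

Lemma prefix_aut m f u z : is_aut m f -> vertex m z -> Defs.prefix u z -> Defs.prefix (f u) (f z).
Proof.
move=> af vz; rewrite /Defs.prefix (aut_size af) => h.
by rewrite -(aut_take af _ vz) h.
Qed.

Lemma prefix_aut_inv m f u z : is_aut m f -> vertex m z -> Defs.prefix (f u) (f z) -> Defs.prefix u z.
Proof.
move=> af vz; rewrite /Defs.prefix (aut_size af) -(aut_take af _ vz) => h.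
exact: (aut_inj af).
Qed.

Lemma fixout_self m c u : is_aut m c -> vertex m u -> fixout m c u -> c u = u.
Proof.
move=> ac vu fc; case: (classic (c u = u)) => // ne.
have vw : vertex m _ := aut_vert ac vu.
have : c (c u) = c u.
  apply: fc => // hp; apply: ne; apply: esym; apply: (prefix_same (esym (aut_size ac u)) hp).
  exact: prefix_refl.
by move/(aut_inj ac).
Qed.

Lemma fixout_conj m y yi c v : is_aut m y -> is_aut m yi -> mulf y yi = idf ->
  fixout m c v -> fixout m (mulf y (mulf c yi)) (y v).
Proof.
move=> ay ayi e fc z vz nz; rewrite /mulf.
have hz : y (yi z) = z by have := equal_f e z.
rewrite fc; first exact: hz.
  by apply: (aut_vert ayi).
move=> hp; apply: nz; rewrite -hz; apply: (prefix_aut ay) => //; by apply: (aut_vert ayi).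
Qed.

Lemma fixout_inv m c c' u : is_aut m c -> is_aut m c' -> vertex m u ->
  mulf c c' = idf -> fixout m c u -> fixout m c' u.
Proof.
move=> ac ac' vu e fc z vz nz.
have hz : c (c' z) = z by have := equal_f e z.
have vw : vertex m _ := aut_vert ac' vz.
case: (classic (Defs.prefix u (c' z))) => hp.
  exfalso; apply: nz; rewrite -hz -(fixout_self ac vu fc); exact: (prefix_aut ac vw hp).
by rewrite -{2}hz fc.
Qed.

Lemma fixout_sub m c u1 w : Defs.prefix w u1 -> fixout m c u1 -> fixout m c w.
Proof. move=> p fc z vz nz; apply: fc => // h; apply: nz; exact: prefix_trans h. Qed.

Lemma php r (P : nat -> nat -> Prop) :
  (forall j, j <= r -> exists i, i < r /\ P j i) ->
  exists a b i, [/\ a < b, b <= r, P a i & P b i].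
Proof.
elim: r P => [|r IH] P h.
  by have [i [hi _]] := h 0 (leqnn 0).
have [c [hc Pc]] := h r.+1 (leqnn _).
case: (classic (exists j, j <= r /\ P j c)) => [[j [hj Pj]]|nj].
  by exists j, r.+1, c; split.
pose P' j i' := exists i, [/\ P j i, i <> c & i' = if i < c then i else i.-1].
have [a [b [i' [hab hb [i1 [P1 n1 e1]] [i2 [P2 n2 e2]]]]]] :
    exists a b i, [/\ a < b, b <= r, P' a i & P' b i].
  apply: IH => j hj.
  have [i [hi Pi]] := h j (leqW hj).
  have nic : i <> c by move=> e; apply: nj; exists j; rewrite -e.
  exists (if i < c then i else i.-1); split; last by exists i.
  case: ifP => hic; lia.
have e : i1 = i2 by move: e1 e2; case: ifP => h1; case: ifP => h2; lia.
exists a, b, i1; split => //; [lia | by rewrite e].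
Qed.

Lemma In_nth_idx (s : list aut) x : List.In x s -> exists i, i < size s /\ nth idf s i = x.
Proof.
elim: s => [|y s IH] //= [->|/IH [i [hi ei]]]; first by exists 0.
by exists i.+1.
Qed.

Lemma pow_fi m G L s x : subgroup_of (is_aut m) G -> subgroup_of G L ->
  (forall g, G g -> exists2 y, List.In y s & exists h, L h /\ g = mulf y h) ->
  G x -> exists d, [/\ 0 < d, d <= size s & L (pw x d)].
Proof.
move=> sG sL hs Gx.
have := @php (size s) (fun j i => exists h, L h /\ pw x j = mulf (nth idf s i) h).
case.
  move=> j _; have [y iy [h [Lh e]]] := hs _ (sg_pw j sG Gx).
  have [i [hi ei]] := In_nth_idx iy; exists i; split => //; exists h; by rewrite ei.
move=> a [b [i [hab hbs [ha [La ea]] [hb [Lb eb]]]]].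
exists (b - a); split; [lia | lia | ].
have [ha' [La' e1 e2]] := sg_V sL La.
have -> : pw x (b - a) = mulf ha' hb.
  apply: functional_extensionality => v.
  apply: (aut_inj (pw_aut a sG Gx)).
  transitivity (pw x b v).
    have hb' : b = a + (b - a) by lia.
    by rewrite [in RHS]hb' pwD.
  rewrite eb ea /mulf; have := equal_f e1 (hb v); by rewrite /mulf /idf => ->.
exact: sg_M sL La' Lb.
Qed.

Lemma ptw (f g : aut) : mulf f g = idf -> forall v, f (g v) = v.
Proof. by move=> e v; have := equal_f e v. Qed.

Lemma rist_nontriv m G u : subgroup_of (is_aut m) G -> branch m G -> just_infinite G ->
  vertex m u -> exists c, [/\ G c, fixout m c u & c <> idf].
Proof.
move=> sG [tr fi] [ninf _] vu.
apply: NNPP => hn.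
have triv : forall v c, vertex m v -> size v = size u -> rist m G v c -> c = idf.
  move=> v c vv sv [Gc fc]; apply: NNPP => nc.
  have [y [Gy yv]] := tr v u vv vu sv.
  have [yi [Gyi e1 e2]] := sg_V sG Gy.
  apply: hn; exists (mulf y (mulf c yi)); split.
  - exact: (sg_M sG Gy (sg_M sG Gc Gyi)).
  - rewrite -yv; apply: fixout_conj => //; exact: (Gaut sG).
  - move=> e; apply: nc.
    have h : mulf yi (mulf (mulf y (mulf c yi)) y) = c.
      apply: functional_extensionality => v0; rewrite /mulf.
      by rewrite !(ptw e2).
    by rewrite -h e.
have [s hs] := fi (size u).
apply: ninf; exists s => g Gg.
have [x ix [h [Rh ->]]] := hs g Gg.
have -> : h = idf.
  apply: (Rh (fun x => x = idf)).
    split.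
    - by move=> h0 ->; exact: sg_1 sG.
    - by [].
    - by move=> x0 y0 -> ->.
    - by move=> h0 ->; exists idf.
  move=> c [v [vv sv rc]]; exact: triv vv _ rc.
exact: ix.
Qed.

Lemma final_contra m G (A : aut -> Prop) a0 :
  subgroup_of (is_aut m) G -> branch m G -> just_infinite G ->
  (forall x, A x -> G x) ->
  (forall x y, A x -> A y -> mulf x y = mulf y x) ->
  (forall x y, A x -> A y -> A (mulf x y)) ->
  (forall a b b', A a -> G b -> mulf b b' = idf -> mulf b' b = idf -> A (mulf b (mulf a b'))) ->
  (forall a, A a -> exists a', A a' /\ mulf a a' = idf) ->
  A a0 -> a0 <> idf -> False.
Proof.
move=> sG br ji AG Acomm AM Anorm AV Aa0 na0.
have aa0 : is_aut m a0 by apply: (Gaut sG); apply: AG.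
have [w [vw nw]] := moves aa0 na0.
have [a0' [Aa0' ea]] := AV _ Aa0.
have aa0' : is_aut m a0' by apply: (Gaut sG); apply: AG.
have key : forall b, G b -> fixout m b w ->
    exists e, A e /\ forall z, vertex m z -> Defs.prefix w z -> e z = b z.
  move=> b Gb fb.
  have [b' [Gb' e1 e2]] := sg_V sG Gb.
  have ab : is_aut m b by apply: (Gaut sG).
  have ab' : is_aut m b' by apply: (Gaut sG).
  have fb' := fixout_inv ab ab' vw e1 fb.
  exists (mulf (mulf b (mulf a0 b')) a0'); split.
    by apply: AM => //; apply: Anorm.
  move=> z vz pz; rewrite /mulf.
  have vz' : vertex m (a0' z) by apply: (aut_vert aa0').
  rewrite fb' //; first by rewrite (ptw ea).
  move=> hp; apply: nw.
  have := prefix_aut aa0 vz' hp; rewrite (ptw ea) => hp2.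
  apply: (prefix_same _ hp2 pz); exact: (aut_size aa0).
have comm : forall b1 b2, G b1 -> fixout m b1 w -> G b2 -> fixout m b2 w ->
    mulf b1 b2 = mulf b2 b1.
  move=> b1 b2 Gb1 fb1 Gb2 fb2.
  have ab1 : is_aut m b1 by apply: (Gaut sG).
  have ab2 : is_aut m b2 by apply: (Gaut sG).
  have [e1 [Ae1 he1]] := key _ Gb1 fb1.
  have [e2 [Ae2 he2]] := key _ Gb2 fb2.
  have ce := equal_f (Acomm _ _ Ae1 Ae2).
  apply: functional_extensionality => z; rewrite /mulf.
  case: (classic (vertex m z)) => vz; last first.
    have h1 := aut_fix ab1 vz. have h2 := aut_fix ab2 vz. by rewrite h2 h1 h2.
  case: (classic (Defs.prefix w z)) => pz; last first.
    have h1 := fb1 z vz pz. have h2 := fb2 z vz pz. by rewrite h2 h1 h2.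
  have pb2 : Defs.prefix w (b2 z).
    rewrite -(fixout_self ab2 vw fb2); exact: (prefix_aut ab2 vz pz).
  have pb1 : Defs.prefix w (b1 z).
    rewrite -(fixout_self ab1 vw fb1); exact: (prefix_aut ab1 vz pz).
  transitivity (e1 (e2 z)).
    by rewrite (he2 z vz pz) (he1 _ (aut_vert ab2 vz) pb2).
  transitivity (e2 (e1 z)); first exact: ce.
  by rewrite (he1 z vz pz) (he2 _ (aut_vert ab1 vz) pb1).
have [c [Gc fc nc]] := rist_nontriv sG br ji vw.
have ac : is_aut m c by apply: (Gaut sG).
have [u1 [vu1 nu1]] := moves ac nc.
have pu1 : Defs.prefix w u1 by apply: NNPP => hp; apply: nu1; apply: fc.
have [d [Gd fd nd]] := rist_nontriv sG br ji vu1.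
have ad : is_aut m d by apply: (Gaut sG).
have cd := comm _ _ Gc fc Gd (fixout_sub pu1 fd).
have [c' [Gc' e1 e2]] := sg_V sG Gc.
have ac' : is_aut m c' by apply: (Gaut sG).
have dconj : mulf c (mulf d c') = d.
  rewrite mulfA cd; apply: functional_extensionality => z; by rewrite /mulf (ptw e1).
have fcd := fixout_conj ac ac' e1 fd.
rewrite dconj in fcd.
apply: nd; apply: functional_extensionality => z.
case: (classic (vertex m z)) => vz; last exact: (aut_fix ad vz).
case: (classic (Defs.prefix u1 z)) => pz; last exact: (fd z vz pz).
apply: fcd => // hp; apply: nu1.
apply: (prefix_same _ hp pz); exact: (aut_size ac).
Qed.

Definition Cent (G S : aut -> Prop) : aut -> Prop :=
  fun x => G x /\ forall s, S s -> mulf x s = mulf s x.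

Lemma Cent_sg A G S : subgroup_of A G -> subgroup_of G (Cent G S).
Proof.
move=> sG; split.
- by move=> h [].
- by split; [exact: sg_1 sG | ].
- move=> x y [Gx cx] [Gy cy]; split; first exact: (sg_M sG Gx Gy).
  move=> s0 Ss; apply: functional_extensionality => v.
  by move: (equal_f (cy _ Ss) v) (equal_f (cx _ Ss) (y v)); rewrite /mulf => -> ->.
- move=> h [Gh ch]; have [h' [Gh' e1 e2]] := sg_V sG Gh.
  exists h'; split => //; split => // s0 Ss.
  apply: functional_extensionality => v.
  have := equal_f (ch _ Ss) (h' v); rewrite /mulf (ptw e1) => <-.
  by rewrite (ptw e2).
Qed.

Lemma sg_self A G : subgroup_of A G -> subgroup_of G G.
Proof.
move=> sG; split => //; first exact: sg_1 sG.
  by move=> x y Gx Gy; exact: (sg_M sG Gx Gy).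
by move=> h Gh; exact: (sg_V sG Gh).
Qed.

Lemma cyc_G A G g h : subgroup_of A G -> G g -> cyclic_sub G g h -> G h.
Proof. move=> sG Gg; apply; [exact: sg_self sG | by move=> s0 ->]. Qed.

Lemma cyc_pw A G g n : subgroup_of A G -> G g -> cyclic_sub G g (pw g n).
Proof. move=> sG Gg H sH hg; apply: (sg_pw n sH); exact: hg. Qed.

Lemma cyc_comm A G g h1 h2 : subgroup_of A G -> G g -> cyclic_sub G g h1 -> cyclic_sub G g h2 ->
  mulf h1 h2 = mulf h2 h1.
Proof.
move=> sG Gg c1 c2.
have st1 : forall h, cyclic_sub G g h -> mulf h g = mulf g h.
  move=> h ch; have hc : Cent G (fun s => s = g) h.
    apply: ch; first exact: Cent_sg sG.
    by move=> s0 ->; split => // s1 ->.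
  by case: hc => _ /(_ g erefl).
have hc : Cent G (cyclic_sub G g) h1.
  apply: c1; first exact: Cent_sg sG.
  move=> s0 ->; split => // s1 cs1; by rewrite st1.
by case: hc => _ /(_ h2 c2).
Qed.


Definition cnj (y yi x : aut) : aut := mulf y (mulf x yi).

Lemma cnjM y yi x1 x2 : mulf yi y = idf ->
  cnj y yi (mulf x1 x2) = mulf (cnj y yi x1) (cnj y yi x2).
Proof. move=> e; apply: functional_extensionality => v; by rewrite /cnj /mulf (ptw e). Qed.

Lemma cnjV y yi x x' : mulf y yi = idf -> mulf yi y = idf -> mulf x x' = idf ->
  mulf (cnj y yi x) (cnj y yi x') = idf.
Proof. move=> e1 e2 e; rewrite -cnjM // e; exact: e1. Qed.

Lemma sg_Vin A K k k' : subgroup_of A K -> K k -> mulf k k' = idf -> K k'.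
Proof.
move=> sK Kk e; have [k'' [Kk'' _ e2]] := sg_V sK Kk; by rewrite -(inv_uniq e e2).
Qed.

Lemma Ginv m G g0 gi : subgroup_of (is_aut m) G -> G g0 -> mulf g0 gi = idf -> G gi.
Proof. move=> sG Gg e; exact: (sg_Vin sG Gg e). Qed.

Lemma vrc_torsion m G : subgroup_of (is_aut m) G -> branch m G -> just_infinite G ->
  VRC G -> torsion G.
Proof.
move=> sG br ji vrc g Gg.
apply: NNPP => nt.
have nt' : forall n, 0 < n -> pw g n <> idf by move=> n hn e; apply: nt; exists n.
have [K [sK [s hs] HK [rho [rH rM rid]]]] := vrc g Gg.
have rho1 : rho idf = idf by apply: rid; exact: (cyc_pw 0 sG Gg).
pose Nc := fun x => G x /\ forall y yi, G y -> mulf y yi = idf -> mulf yi y = idf ->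
  K (cnj y yi x) /\ rho (cnj y yi x) = idf.
have nN : normal_in G Nc.
  split.
    split.
    - by move=> h [].
    - split; first exact: sg_1 sG.
      move=> y yi Gy e1 e2; have -> : cnj y yi idf = idf by exact: e1.
      by split; [exact: sg_1 sK | exact: rho1].
    - move=> x1 x2 [G1 h1] [G2 h2]; split; first exact: (sg_M sG G1 G2).
      move=> y yi Gy e1 e2; rewrite cnjM //.
      have [K1 r1] := h1 y yi Gy e1 e2; have [K2 r2] := h2 y yi Gy e1 e2.
      split; first exact: (sg_M sK K1 K2).
      by rewrite rM // r1 r2.
    - move=> x [Gx hx]; have [x' [Gx' ex1 ex2]] := sg_V sG Gx.
      exists x'; split => //; split => // y yi Gy e1 e2.
      have [K1 r1] := hx y yi Gy e1 e2.
      have cv := cnjV e1 e2 ex1.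
      have K1' := sg_Vin sK K1 cv.
      split => //.
      have := rM _ _ K1 K1'; rewrite cv rho1 r1 => h; exact: (esym h).
  move=> g0 gi n Gg0 e1 e2 [Gn hn].
  have Ggi := Ginv sG Gg0 e1.
  split; first exact: (sg_M sG Gg0 (sg_M sG Gn Ggi)).
  move=> y yi Gy f1 f2.
  have E1 : mulf (mulf y g0) (mulf gi yi) = idf.
    by apply: functional_extensionality => v; rewrite /mulf (ptw e1) (ptw f1).
  have E2 : mulf (mulf gi yi) (mulf y g0) = idf.
    by apply: functional_extensionality => v; rewrite /mulf (ptw f2) (ptw e2).
  exact: (hn _ _ (sg_M sG Gy Gg0) E1 E2).
case: (classic (exists n, Nc n /\ n <> idf)) => [ex | nex].
  have [s' hs'] := ji.2 _ nN ex.
  have [d [d0 _ Nd]] := pow_fi sG (proj1 nN) hs' Gg.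
  have [_ hd] := Nd.
  have [_ rd] := hd idf idf (sg_1 sG) erefl erefl.
  have : rho (pw g d) = idf := rd.
  rewrite rid; last exact: (cyc_pw d sG Gg).
  exact: nt' d0.
have triv : forall n, Nc n -> n = idf.
  by move=> n Nn; apply: NNPP => ne; apply: nex; exists n.
pose A := fun x => G x /\ forall y yi, G y -> mulf y yi = idf -> mulf yi y = idf ->
  K (cnj y yi x).
pose e := (size s)`!.
apply: (@final_contra m G A (pw g e) sG br ji).
- by move=> x [].
- move=> x1 x2 [G1 h1] [G2 h2].
  have [x1' [G1' a1 b1]] := sg_V sG G1.
  have [x2' [G2' a2 b2]] := sg_V sG G2.
  pose c := mulf (mulf (mulf x1 x2) x1') x2'.
  have Nc_c : Nc c.
    split; first exact: (sg_M sG (sg_M sG (sg_M sG G1 G2) G1') G2').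
    move=> y yi Gy e1 e2.
    have K1 := h1 y yi Gy e1 e2; have K2 := h2 y yi Gy e1 e2.
    have K1' := sg_Vin sK K1 (cnjV e1 e2 a1).
    have K2' := sg_Vin sK K2 (cnjV e1 e2 a2).
    rewrite /c (cnjM (mulf (mulf x1 x2) x1') x2' e2) (cnjM (mulf x1 x2) x1' e2) (cnjM x1 x2 e2).
    have K12 := sg_M sK K1 K2; have K121 := sg_M sK K12 K1'.
    split; first exact: (sg_M sK K121 K2').
    rewrite rM // rM // rM //.
    have r1 : mulf (rho (cnj y yi x1)) (rho (cnj y yi x1')) = idf.
      by rewrite -rM // (cnjV e1 e2 a1) rho1.
    have r2 : mulf (rho (cnj y yi x2)) (rho (cnj y yi x2')) = idf.
      by rewrite -rM // (cnjV e1 e2 a2) rho1.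
    rewrite (cyc_comm sG Gg (rH _ K1) (rH _ K2)).
    change (mulf (rho (cnj y yi x2)) (mulf (mulf (rho (cnj y yi x1)) (rho (cnj y yi x1'))) (rho (cnj y yi x2'))) = idf).
    rewrite r1; exact: r2.
  have hc := triv _ Nc_c.
  apply: functional_extensionality => v.
  have := equal_f hc (x2 (x1 v)); rewrite /c /mulf (ptw b2) (ptw b1) => ->.
  by [].
- move=> x1 x2 [G1 h1] [G2 h2]; split; first exact: (sg_M sG G1 G2).
  move=> y yi Gy e1 e2; rewrite cnjM //; exact: (sg_M sK (h1 y yi Gy e1 e2) (h2 y yi Gy e1 e2)).
- move=> a b b' [Ga ha] Gb e1 e2.
  have Gb' := Ginv sG Gb e1.
  split; first exact: (sg_M sG Gb (sg_M sG Ga Gb')).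
  move=> y yi Gy f1 f2.
  have E1 : mulf (mulf y b) (mulf b' yi) = idf.
    by apply: functional_extensionality => v; rewrite /mulf (ptw e1) (ptw f1).
  have E2 : mulf (mulf b' yi) (mulf y b) = idf.
    by apply: functional_extensionality => v; rewrite /mulf (ptw f2) (ptw e2).
  exact: (ha _ _ (sg_M sG Gy Gb) E1 E2).
- move=> a [Ga ha]; have [a' [Ga' ea1 ea2]] := sg_V sG Ga.
  exists a'; split => //; split => // y yi Gy e1 e2.
  exact: (sg_Vin sK (ha y yi Gy e1 e2) (cnjV e1 e2 ea1)).
- split; first exact: (sg_pw e sG Gg).
  move=> y yi Gy e1 e2.
  rewrite /cnj -pw_conj //.
  have Gc : G (cnj y yi g) by exact: (sg_M sG Gy (sg_M sG Gg (Ginv sG Gy e1))).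
  have [d [d0 ds Kd]] := pow_fi sG sK hs Gc.
  have -> : e = d * (e %/ d) by rewrite mulnC divnK // dvdn_fact // d0 ds.
  rewrite pwM; exact: (sg_pw _ sK Kd).
- exact: nt' (fact_gt0 _).
Qed.

Lemma cyc_char A G g n h : subgroup_of A G -> G g -> 0 < n -> pw g n = idf ->
  cyclic_sub G g h -> exists i, h = pw g i.
Proof.
move=> sG Gg n0 en ch; apply: (ch (fun x => exists i, x = pw g i)).
  split.
  - by move=> x [i ->]; exact: (sg_pw i sG Gg).
  - by exists 0.
  - by move=> x y [i ->] [j ->]; exists (i + j); rewrite pwD.
  - move=> x [i ->]; exists (pw g (i * (n - 1))).
    have e : mulf (pw g i) (pw g (i * (n - 1))) = idf.
      rewrite -pwD.
      have -> : i + i * (n - 1) = n * i by case: n n0 {en} => // n' _; rewrite subn1 /= mulSn (mulnC n').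
      by rewrite pwM en pw_idf.
    split => //; first by exists (i * (n - 1)).
    by rewrite pwC.
by move=> s0 ->; exists 1.
Qed.

Lemma moved_ext m f v L : (forall i, 2 <= m i) -> is_aut m f -> vertex m v -> f v <> v ->
  size v <= L -> exists z, [/\ vertex m z, size z = L & f z <> z].
Proof.
move=> hm af vv nv hL.
exists (v ++ nseq (L - size v) 0); split.
- move=> i; rewrite size_cat size_nseq => hi; rewrite nth_cat.
  case: ifP => hi2; first exact: vv.
  rewrite nth_nseq; case: ifP => _; have := hm i; lia.
- rewrite size_cat size_nseq; lia.
- move=> e; apply: nv.
  have vz : vertex m (v ++ nseq (L - size v) 0).
    move=> i; rewrite size_cat size_nseq => hi; rewrite nth_cat.
    case: ifP => hi2; first exact: vv.
    rewrite nth_nseq; case: ifP => _; have := hm i; lia.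
  have := aut_take af (size v) vz.
  by rewrite e take_size_cat.
Qed.

Lemma levelN m G g : (forall i, 2 <= m i) -> subgroup_of (is_aut m) G -> G g ->
  forall n, exists N, forall d, d < n -> pw g d <> idf ->
    exists z, [/\ vertex m z, size z = N & pw g d z <> z].
Proof.
move=> hm sG Gg; elim => [|k [N0 IH]]; first by exists 0.
case: (classic (pw g k = idf)) => ek.
  exists N0 => d hd nd; apply: IH => //.
  have : d <> k by move=> e; apply: nd; rewrite e.
  lia.
have [v [vv nv]] := moves (pw_aut k sG Gg) ek.
exists (maxn N0 (size v)) => d hd nd.
case: (ltnP d k) => hdk.
  have [z [vz sz nz]] := IH d hdk nd.
  apply: (moved_ext hm (pw_aut d sG Gg) vz nz); lia.
have -> : d = k by lia.
apply: (moved_ext hm (pw_aut k sG Gg) vv nv); lia.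
Qed.

Lemma pw_mod g n a : pw g n = idf -> pw g a = pw g (a %% n).
Proof.
move=> en; rewrite {1}(divn_eq a n) pwD mulnC pwM en pw_idf; by [].
Qed.

Lemma pw_uniq m G g n N a b : subgroup_of (is_aut m) G -> G g -> 0 < n -> pw g n = idf ->
  (forall d, d < n -> pw g d <> idf -> exists z, [/\ vertex m z, size z = N & pw g d z <> z]) ->
  (forall z, vertex m z -> size z = N -> pw g a z = pw g b z) -> pw g a = pw g b.
Proof.
move=> sG Gg n0 en hN.
rewrite (pw_mod a en) (pw_mod b en).
have := ltn_pmod a n0; have := ltn_pmod b n0.
move: (a %% n) (b %% n) => {}a {}b.
wlog: a b / a <= b => [W hb ha ag|hab hb ha ag].
  case: (leqP a b) => h; first exact: W.
  apply: esym; apply: W => //; first lia.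
  by move=> z vz sz; rewrite ag.
have eb : b = a + (b - a) by lia.
rewrite eb pwD.
case: (classic (pw g (b - a) = idf)) => [-> //|nd].
have [z [vz sz nz]] := hN (b - a) ltac:(lia) nd.
exfalso; apply: nz.
apply: (aut_inj (pw_aut a sG Gg)).
have h : pw g a z = pw g (a + (b - a)) z by rewrite -eb; exact: ag.
rewrite pwD in h; exact: (esym h).
Qed.

Fixpoint tuples (T : eqType) (s : seq T) k : seq (seq T) :=
  if k is k'.+1 then [seq x :: t | x <- s, t <- tuples s k'] else [:: [::]].

Lemma mem_tuples (T : eqType) (s : seq T) k t :
  size t = k -> all (mem s) t -> t \in tuples s k.
Proof.
elim: k t => [|k IH] [|x t] //= [st] /andP [xs ts].
exact: allpairs_f xs (IH t st ts).
Qed.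

Lemma size_tuples (T : eqType) (s : seq T) k t : t \in tuples s k -> size t = k.
Proof.
elim: k t => [|k IH] t /=; first by rewrite inE => /eqP ->.
by case/allpairsP => [[x t'] [/= _ ht ->]] /=; rewrite (IH _ ht).
Qed.

Lemma mem_In (T : eqType) (x : T) s : x \in s -> List.In x s.
Proof. elim: s => [|y s IH] //=; rewrite inE => /orP [/eqP ->|/IH]; by [left|right]. Qed.

Lemma map_eq_in (f g : aut) W z : map f W = map g W -> z \in W -> f z = g z.
Proof.
elim: W => [|y W IH] //= [e1 e2]; rewrite inE => /orP [/eqP ->|]; first exact: e1.
exact: IH.
Qed.

Lemma le_sumn (m : nat -> nat) i s : i \in s -> m i <= sumn (map m s).
Proof.
elim: s => [|y s IH] //=; rewrite inE => /orP [/eqP ->|/IH]; lia.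
Qed.

Definition stab m (G : aut -> Prop) N : aut -> Prop :=
  fun k => G k /\ forall z, vertex m z -> size z = N -> k z = z.

Lemma stab_fi m G N : subgroup_of (is_aut m) G -> finite_index G (stab m G N).
Proof.
move=> sG.
pose M := sumn (map m (iota 0 N)).
pose W := tuples (iota 0 M) N.
have inW : forall z, vertex m z -> size z = N -> z \in W.
  move=> z vz sz; apply: mem_tuples => //.
  apply/(all_nthP 0) => i hi; change (nth 0 z i \in iota 0 M); rewrite mem_iota /=.
  have := vz i hi; have : m i <= M by apply: le_sumn; rewrite mem_iota; lia.
  lia.
pose C := tuples W (size W).
pose rep := fun c : seq (seq nat) => epsilon (inhabits idf) (fun x => G x /\ map x W = c).
exists (map rep C) => g' Gg'.
have ag' : is_aut m g' by apply: (Gaut sG).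
pose c := map g' W.
have cC : c \in C.
  apply: mem_tuples; first by rewrite size_map.
  apply/allP => y /mapP [z zW ->].
  case: (classic (vertex m z)) => vz; last by rewrite (aut_fix ag' vz).
  apply: inW; first exact: (aut_vert ag' vz).
  by rewrite (aut_size ag'); apply: (size_tuples zW).
have [Gx ex] : G (rep c) /\ map (rep c) W = c.
  by apply: (epsilon_spec (inhabits idf) (fun x => G x /\ map x W = c)); exists g'.
set x := rep c in Gx ex *.
have [x' [Gx' e1 e2]] := sg_V sG Gx.
exists x; first by apply: List.in_map; apply: mem_In.
exists (mulf x' g'); split.
  split; first exact: (sg_M sG Gx' Gg').
  move=> z vz sz; rewrite /mulf -(map_eq_in ex (inW z vz sz)).
  exact: (ptw e2).
apply: functional_extensionality => v; by rewrite /mulf (ptw e1).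
Qed.

Lemma torsion_vrc m G : (forall i, 2 <= m i) -> subgroup_of (is_aut m) G ->
  torsion G -> VRC G.
Proof.
move=> hm sG tor g Gg.
have [n [n0 en]] := tor g Gg.
change (pw g n = idf) in en.
have [N hN] := levelN hm sG Gg n.
have uniq := fun a b => @pw_uniq m G g n N a b sG Gg n0 en hN.
pose agree i (k : aut) := forall z, vertex m z -> size z = N -> k z = pw g i z.
pose K := fun k => G k /\ exists i, agree i k.
pose ix := fun k => epsilon (inhabits 0) (fun i => agree i k).
have ixP : forall k, K k -> agree (ix k) k.
  move=> k [_ ex]; exact: (epsilon_spec (inhabits 0) (fun i => agree i k) ex).
have agM : forall x y i j, agree i x -> agree j y -> agree (i + j) (mulf x y).
  move=> x y i j ax ay z vz sz; rewrite /mulf ay // ax; first by rewrite pwD.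
    exact: (aut_vert (pw_aut j sG Gg) vz).
  by rewrite (aut_size (pw_aut j sG Gg)).
exists K; split.
- split.
  + by move=> h [].
  + by split; [exact: sg_1 sG | exists 0].
  + move=> x y [Gx [i ax]] [Gy [j ay]]; split; first exact: (sg_M sG Gx Gy).
    exists (i + j); exact: agM.
  + move=> k [Gk [i ak]]; have [k' [Gk' e1 e2]] := sg_V sG Gk.
    exists k'; split => //; split => //; exists (i * (n - 1)) => z vz sz.
    have ak' : is_aut m k' by apply: (Gaut sG).
    have vw : vertex m (k' z) := aut_vert ak' vz.
    have sw : size (k' z) = N by rewrite (aut_size ak').
    have := ak _ vw sw; rewrite (ptw e1) => hz; rewrite [in RHS]hz.
    rewrite -[X in _ = X]/(mulf (pw g (i * (n - 1))) (pw g i) (k' z)) -pwD.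
    have -> : i * (n - 1) + i = n * i by case: n n0 {en hN uniq} => // n' _; rewrite subn1 /= mulSn addnC (mulnC n').
    by rewrite pwM en pw_idf.
- have [s hs] := stab_fi N sG.
  exists s => g' Gg'; have [x ix' [h [[Gh fh] ->]]] := hs g' Gg'.
  exists x => //; exists h; split => //; split => //; exists 0 => z vz sz.
  exact: fh.
- move=> h ch; have [j ->] := cyc_char sG Gg n0 en ch.
  split; first exact: (sg_pw j sG Gg).
  by exists j.
- exists (fun k => pw g (ix k)); split.
  + move=> k _; exact: (cyc_pw (ix k) sG Gg).
  + move=> x y Kx Ky.
    have Kxy : K (mulf x y) by split; [exact: (sg_M sG (proj1 Kx) (proj1 Ky)) | exists (ix x + ix y); exact: (agM _ _ _ _ (ixP _ Kx) (ixP _ Ky))].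
    rewrite -pwD; apply: uniq => z vz sz.
    rewrite -(ixP _ Kxy z vz sz); exact: (agM _ _ _ _ (ixP _ Kx) (ixP _ Ky) z vz sz).
  + move=> h ch; have [j ->] := cyc_char sG Gg n0 en ch.
    have Kh : K (pw g j) by split; [exact: (sg_pw j sG Gg) | by exists j].
    apply: uniq => z vz sz; by rewrite -(ixP _ Kh z vz sz).
Qed.

Theorem lemma3p8 (m : nat -> nat) (G : aut -> Prop) :
  (forall i, 2 <= m i) ->
  subgroup_of (is_aut m) G ->
  branch m G ->
  just_infinite G ->
  (VRC G <-> torsion G).
Proof.
move=> hm sG br ji; split.
  exact: (vrc_torsion sG br ji).
exact: (torsion_vrc hm sG).
Qed.
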